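(* Let $a,b$ be polynomials with $a(0)\ne0$, $b(0)\ne0$, and $a(z)a^*(z)=b(z)b^*(z)$ for infinitely many $z\in\mathbb C^*$. Then $a$ and $b$ have the same degree $m$. Let $C_a,C_b$ be their leading coefficients, $\mathcal R_a=\{\alpha_1,\dots,\alpha_m\}$, $\mathcal R_b=\{\beta_1,\dots,\beta_m\}$ the multisets of their zeros, $\mathcal R_{ab}$ the multiset of common zeros, $\overline{\mathcal R}_a:=\mathcal R_a\setminus\mathcal R_{ab}$, $\overline{\mathcal R}_b:=\mathcal R_b\setminus\mathcal R_{ab}$. Then: (a) the multisets $\{\alpha_1,\dots,\alpha_m,1/\overline{\alpha_1},\dots,1/\overline{\alpha_m}\}$ and $\{\beta_1,\dots,\beta_m,1/\overline{\beta_1},\dots,1/\overline{\beta_m}\}$ are equal; (b) $\mathcal R_a,\mathcal R_b,\mathcal R_{ab}$ have the same multiplicity for each zero on the unit circle $\mathbb T$, and $\overline{\mathcal R}_a,\overline{\mathcal R}_b$ contain no element of $\mathbb T$; (c) if $y\in\overline{\mathcal R}_a$ with multiplicity $k$, then $y\notin\overline{\mathcal R}_b$, $1/\overline y\notin\overline{\mathcal R}_a$, and $1/\overline y\in\overline{\mathcal R}_b$ with multiplicity $k$ (and symmetrically with $a,b$ exchanged); (d) $|\overline{\mathcal R}_a|=|\overline{\mathcal R}_b|$ and $\prod_{y\in\overline{\mathcal R}_a}y=\prod_{y\in\overline{\mathcal R}_b}1/\overline y$; (e) $C_b=\lambda C_a\big|\prod_{y\in\overline{\mathcal R}_a}y\big|$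 for some $\lambda\in\mathbb T$; (f) for a fixed polynomial $a$ with $a(0)\ne0$, the number of polynomials $b$ satisfying the hypotheses together with $b(0)\in\mathbb R$, $b(0)>0$ (respectively $b(0)<0$) equals $\mathcal N(R)$, where $R:=\{\alpha_1,\dots,\alpha_m,1/\overline{\alpha_1},\dots,1/\overline{\alpha_m}\}$.
   Context: $\mathbb T$ is the unit circle, $\mathbb C^*=\mathbb C\setminus\{0\}$, and for a Laurent polynomial $a$, $a^*(z):=\overline{a(1/\overline z)}$. Multisets: $B\subseteq A$ means each multiplicity in $B$ is at most that in $A$, and $A\setminus B$ is the unique multiset with $(A\setminus B)\cup B=A$. Counting function: for a finite multiset $R\subset\mathbb C^*$, define the equivalence relation $\alpha\sim\beta$ iff $\alpha=\beta$ or $\alpha=1/\overline\beta$, and suppose every equivalence class (counted as a multiset) has even size. For a class $y$, set $\sharp(y):=1$ if $y$ meets $\mathbb T$ and $\sharp(y):=1+|y|/2$ otherwise; then $\mathcal N(R):=\prod_{y\in R/\sim}\sharp(y)$. *)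

(* Defs.v *)
(* The complex numbers are modelled by an arbitrary
   numClosedFieldType C (e.g. complex R for R : rcfType), with conjugation
   z^* and norm `|z|. *)
From HB Require Import structures.
From mathcomp Require Import all_boot all_order all_algebra.
Set Implicit Arguments. Unset Strict Implicit. Unset Printing Implicit Defensive.
Import Order.TTheory GRing.Theory Num.Theory.
Local Open Scope ring_scope.

Section Defs.
Variable C : numClosedFieldType.

Definition invc (z : C) : C := (z^*)^-1.

Definition pstar (a : {poly C}) (z : C) : C := (a.[invc z])^*.

Definition infinitely_many (P : C -> Prop) : Prop :=
  forall s : seq C, exists z, z \notin s /\ P z.

Definition same_modulus (a b : {poly C}) : Prop :=
  infinitely_many (fun z => z != 0 /\ a.[z] * pstar a z = b.[z] * pstar b z).

Definition zeros_of (a : {poly C}) (s : seq C) : Prop :=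
  a = lead_coef a *: \prod_(z <- s) ('X - z%:P).

(* multisets are represented by sequences up to permutation *)
Definition msub (A B : seq C) : seq C := foldr (fun x acc => rem x acc) A B.
Definition mint (A B : seq C) : seq C := msub A (msub A B).

Definition eqv (x y : C) : bool := (x == y) || (x == invc y).

Definition eclass (R : seq C) (y : C) : seq C := [seq x <- R | eqv x y].

Definition eclasses (R : seq C) : seq (seq C) := undup [seq eclass R y | y <- R].

Definition sharp (c : seq C) : nat :=
  if has (fun x => `|x| == 1) c then 1%N else (1 + size c %/ 2)%N.

Definition Ncount (R : seq C) : nat := \prod_(c <- eclasses R) sharp c.

End Defs.

(* Main.v *)
Require Import Defs.
From HB Require Import structures.
From mathcomp Require Import all_boot all_order all_algebra.
From mathcomp Require Import ring lra zify.
Set Implicit Arguments. Unset Strict Implicit. Unset Printing Implicit Defensive.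
Import Order.TTheory GRing.Theory Num.Theory.
Local Open Scope ring_scope.

Section S.
Variable C : numClosedFieldType.
Implicit Types (x y z : C) (r s : seq C).

Lemma conjV x : (x^-1)^* = (x^*)^-1. Proof. exact: fmorphV. Qed.

Lemma invcK : involutive (@invc C).
Proof. by move=> x; rewrite /invc conjV conjCK invrK. Qed.

Lemma invc_eq0 x : (invc x == 0) = (x == 0).
Proof. by rewrite /invc invr_eq0 conjC_eq0. Qed.

Lemma invc_fix x : x != 0 -> (invc x == x) = (`|x| == 1).
Proof.
move=> x0; rewrite /invc -[`|x| == 1](@eqrXn2 _ 2) ?normr_ge0 // expr1n normCK.
have cx : x^* != 0 by rewrite conjC_eq0.
apply/eqP/eqP => [h|h]; first by rewrite -{1}h mulVf.
by rewrite -[LHS]mul1r -h mulfK.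
Qed.

Lemma count_invc x s : count_mem x (map (@invc C) s) = count_mem (invc x) s.
Proof.
elim: s => //= y s ->; congr (_ + _)%N.
have -> : (invc y == x) = (y == invc x) by apply/eqP/eqP => h; [rewrite -h invcK|rewrite h invcK].
by [].
Qed.

Lemma count_rem x y s : count_mem x (rem y s) = (count_mem x s - (x == y))%N.
Proof.
elim: s => [|z s IH] /=; first by rewrite sub0n.
case: (eqVneq z y) => [->|zy] /=; first by rewrite eq_sym addKn.
rewrite IH; case: (eqVneq x y) => [xy|xy]; last by rewrite !subn0.
by rewrite xy (negbTE zy) !add0n.
Qed.

Lemma count_msub x A B : count_mem x (msub A B) = (count_mem x A - count_mem x B)%N.
Proof.
elim: B => [|b B IH] /=; first by rewrite subn0.
by rewrite count_rem IH /= eq_sym -subnDA addnC.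
Qed.

Lemma count_mint x A B : count_mem x (mint A B) = minn (count_mem x A) (count_mem x B).
Proof. by rewrite /mint !count_msub; lia. Qed.

End S.

Section S2.
Variable C : numClosedFieldType.
Implicit Types (x y z c : C) (r s : seq C).

Definition Kof c r := c * c^* * \prod_(x <- r) (- x^*).
Definition Q2 r : {poly C} := \prod_(x <- r ++ map (@invc C) r) ('X - x%:P).
Definition polyof c r : {poly C} := c *: \prod_(x <- r) ('X - x%:P).

Lemma factor_id x z : x != 0 -> z != 0 -> (invc z - x)^* = - x^* * (z - invc x) / z.
Proof.
move=> x0 z0; have cx : x^* != 0 by rewrite conjC_eq0.
rewrite /invc rmorphB /= conjV conjCK; field; by apply/andP.
Qed.

Lemma prod_conj_factor r z : all (fun x => x != 0) r -> z != 0 ->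
  \prod_(x <- r) (invc z - x)^* =
  \prod_(x <- r) (- x^*) * \prod_(x <- r) (z - invc x) / z ^+ size r.
Proof.
move=> + z0; elim: r => [|x r IH] /=; first by rewrite !big_nil expr0 invr1 !mulr1.
case/andP=> x0 /IH{}IH; rewrite !big_cons IH factor_id // exprS invfM.
ring.
Qed.

Lemma eval_mod c r z : z != 0 -> all (fun x => x != 0) r ->
  (polyof c r).[z] * pstar (polyof c r) z = Kof c r * (Q2 r).[z] / z ^+ size r.
Proof.
move=> z0 r0; rewrite /pstar /polyof /Kof /Q2 !hornerZ !horner_prod rmorphM rmorph_prod.
rewrite big_cat big_map /=.
have H1 w (F : C -> C) : \prod_(i <- r) ('X - (F i)%:P).[w] = \prod_(i <- r) (w - F i).
  by apply: eq_bigr => i _; rewrite hornerXsubC.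
have H2 w : \prod_(i <- r) (('X - i%:P).[w])^* = \prod_(i <- r) (w - i)^*.
  by apply: eq_bigr => i _; rewrite hornerXsubC.
rewrite (H1 z (fun i => i)) H2 (H1 z (@invc C)).
rewrite prod_conj_factor //.
ring.
Qed.

End S2.

Section S3.
Variable C : numClosedFieldType.
Implicit Types (x y z c : C) (r s : seq C) (a b : {poly C}).

Lemma zeros_ofE a r : zeros_of a r -> a = polyof (lead_coef a) r.
Proof. by []. Qed.

Lemma polyof0 c r : (polyof c r).[0] = c * \prod_(x <- r) (- x).
Proof.
rewrite /polyof hornerZ horner_prod; congr (_ * _).
by apply: eq_bigr => x _; rewrite hornerXsubC sub0r.
Qed.

Lemma zeros_nz a r : zeros_of a r -> a.[0] != 0 ->
  lead_coef a != 0 /\ all (fun x => x != 0) r.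
Proof.
move=> Za a0; split.
  by rewrite lead_coef_eq0; apply: contraNneq a0 => ->; rewrite horner0.
move: a0; rewrite (zeros_ofE Za) polyof0 mulf_eq0 negb_or => /andP[_].
rewrite prodf_seq_neq0 => /allP h; apply/allP => x /h /=.
by rewrite oppr_eq0.
Qed.

Lemma all_invc_nz r : all (fun x => x != 0) r -> all (fun x => x != 0) (r ++ map (@invc C) r).
Proof.
move=> h; rewrite all_cat h /= all_map; apply/allP => x /(allP h) /=.
by rewrite invc_eq0.
Qed.

Lemma Kof_nz c r : c != 0 -> all (fun x => x != 0) r -> Kof c r != 0.
Proof.
move=> c0 r0; rewrite /Kof !mulf_neq0 // ?conjC_eq0 // prodf_seq_neq0.
by apply/allP => x /(allP r0) /=; rewrite oppr_eq0 conjC_eq0.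
Qed.

Lemma Q2_monic r : Q2 r \is monic.
Proof. exact: monic_prod_XsubC. Qed.

Lemma size_Q2 r : size (Q2 r) = (size r + size r).+1.
Proof. by rewrite /Q2 size_prod_XsubC size_cat size_map. Qed.

Lemma exists_avoid s : exists z : C, z \notin s /\ z != 0.
Proof.
pose l := [seq (i.+1)%:R : C | i <- iota 0 (size s).+1].
have ul : uniq l.
  by rewrite map_inj_uniq ?iota_uniq // => i j /eqP; rewrite eqr_nat => /eqP; case.
have : ~~ all (fun z => z \in s) l.
  apply/negP => /allP sub; have := uniq_leq_size ul sub.
  by rewrite size_map size_iota ltnn.
case/allPn => z /mapP[i _ ->] zs; exists (i.+1)%:R; split => //.
by rewrite pnatr_eq0.
Qed.

Lemma poly_inf_roots (P : {poly C}) :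
  (forall s, exists z, z \notin s /\ P.[z] = 0) -> P = 0.
Proof.
move=> h; apply/eqP/negPn/negP => P0.
have [rs Prs] := closed_field_poly_normal P.
have [z [zrs Pz]] := h rs; move: Pz; rewrite Prs hornerZ horner_prod => /eqP.
rewrite mulf_eq0 lead_coef_eq0 (negbTE P0) /= prodf_seq_eq0 => /hasP[x xrs /=].
by rewrite hornerXsubC subr_eq0 => /eqP zx; move: zrs; rewrite zx xrs.
Qed.

Lemma part1 a b ra rb : zeros_of a ra -> zeros_of b rb -> a.[0] != 0 -> b.[0] != 0 ->
  same_modulus a b ->
  [/\ size ra = size rb, perm_eq (ra ++ map (@invc C) ra) (rb ++ map (@invc C) rb)
    & Kof (lead_coef a) ra = Kof (lead_coef b) rb].
Proof.
move=> Za Zb a0 b0 SM.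
have [ca0 ra0] := zeros_nz Za a0; have [cb0 rb0] := zeros_nz Zb b0.
rewrite (zeros_ofE Za) (zeros_ofE Zb) in SM.
set ca := lead_coef a in SM *; set cb := lead_coef b in SM *.
have Ka0 := Kof_nz ca0 ra0; have Kb0 := Kof_nz cb0 rb0.
set Ka := Kof ca ra in Ka0 *; set Kb := Kof cb rb in Kb0 *.
set m := size ra; set n := size rb.
have P0 : Ka *: (Q2 ra * 'X^n) - Kb *: (Q2 rb * 'X^m) = 0.
  apply: poly_inf_roots => s; have [z [zs [z0 E]]] := SM s; exists z; split => //.
  move: E; rewrite !eval_mod // => E.
  have zm : z ^+ m != 0 by rewrite expf_neq0.
  have zn : z ^+ n != 0 by rewrite expf_neq0.
  have E' : Ka * (Q2 ra).[z] = Kb * (Q2 rb).[z] / z ^+ n * z ^+ m.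
    by rewrite -E divfK.
  rewrite hornerD hornerN !hornerZ !hornerM !hornerXn -/m -/n.
  rewrite mulrA E'; field; exact: zn.
move/eqP: P0; rewrite subr_eq0 => /eqP E.
have mn : m = n.
  have := congr1 (fun p : {poly C} => size p) E; rewrite !size_scale // !size_Mmonic ?monicXn ?monic_neq0 ?Q2_monic //.
  rewrite !size_Q2 !size_polyXn /=; lia.
move: E; rewrite -mn !scalerAl => /mulIf E.
have /E{}E : 'X^m != 0 :> {poly C} by rewrite monic_neq0 ?monicXn.
have KK : Ka = Kb.
  have := congr1 lead_coef E; rewrite !lead_coefZ !(monicP (Q2_monic _)) !mulr1 //.
split => //.
by move: E; rewrite KK => /(scalerI Kb0) /prod_XsubC_eq.
Qed.

End S3.

Section S4.
Variable C : numClosedFieldType.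
Implicit Types (x y z c : C) (r s : seq C) (a b : {poly C}).

Lemma memE x s : (x \in s) = (0 < count_mem x s)%N.
Proof. by rewrite -has_pred1 has_count. Qed.

Lemma sumcount ra rb : perm_eq (ra ++ map (@invc C) ra) (rb ++ map (@invc C) rb) ->
  forall x, (count_mem x ra + count_mem (invc x) ra = count_mem x rb + count_mem (invc x) rb)%N.
Proof.
move=> /permP h x; have := h (pred1 x).
by rewrite !count_cat !count_invc.
Qed.

Lemma unit_invc x : `|x| = 1 -> invc x = x.
Proof.
move=> h; have x0 : x != 0 by apply: contra_eqN h => /eqP ->; rewrite normr0 eq_sym oner_eq0.
by apply/eqP; rewrite invc_fix // h.
Qed.

Lemma count_sub_le x A B : (count_mem x (msub A B) <= count_mem x A)%N.
Proof. by rewrite count_msub leq_subr. Qed.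

Lemma msub_nz A B : all (fun x => x != 0) A -> all (fun x => x != 0) (msub A B).
Proof.
move=> h; apply/allP => x xin; apply/negP => /eqP x0; subst x.
move: xin; rewrite memE => /leq_trans/(_ (count_sub_le _ _ _)).
rewrite -memE => /(allP h); by rewrite eqxx.
Qed.

Lemma prod_inv_conj l : all (fun x => x != 0) l ->
  \prod_(y <- l) (- y^-1) * (\prod_(y <- l) y * (\prod_(y <- l) y)^*) = \prod_(y <- l) (- y^*).
Proof.
elim: l => [|y l IH] /=; first by rewrite !big_nil rmorph1 !mulr1.
case/andP => y0 /IH{}IH; rewrite !big_cons rmorphM /= -IH.
have : y^* != 0 by rewrite conjC_eq0.
move: (\prod_(j <- l) - j^-1) (\prod_(j <- l) j) (\prod_(j <- l) j)^* => A B D cy.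
field; exact: y0.
Qed.

Lemma invc_conj y : (invc y)^* = y^-1.
Proof. by rewrite /invc conjV conjCK. Qed.

Lemma key_prod ra rb : all (fun x => x != 0) ra ->
  perm_eq (ra ++ map (@invc C) ra) (rb ++ map (@invc C) rb) ->
  let P := \prod_(y <- msub ra (mint ra rb)) y in
  \prod_(x <- rb) (- x^*) * (P * P^*) = \prod_(x <- ra) (- x^*).
Proof.
move=> ra0 hp P; have hc := sumcount hp.
set Rab := mint ra rb; set bRa := msub ra Rab; set bRb := msub rb Rab.
have pa : perm_eq ra (Rab ++ bRa).
  apply/allP => x _ /=; apply/eqP; rewrite count_cat /bRa /Rab /mint !count_msub; move: (count_mem x ra) (count_mem x rb) => u v; clear; lia.
have pb : perm_eq rb (Rab ++ map (@invc C) bRa).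
  apply/allP => x _ /=; apply/eqP; rewrite count_cat count_invc /bRa /Rab /mint !count_msub.
  have := hc x; move: (count_mem x ra) (count_mem x rb) (count_mem (invc x) ra) (count_mem (invc x) rb) => u v u2 v2; clear; lia.
rewrite (perm_big _ pa) (perm_big _ pb) !big_cat /= big_map -mulrA; congr (_ * _).
under eq_bigr do rewrite invc_conj.
by rewrite prod_inv_conj // msub_nz.
Qed.

End S4.

Section S5.
Variable C : numClosedFieldType.
Implicit Types (x y z c : C) (r s : seq C) (a b : {poly C}).

Lemma partAE a b : a.[0] != 0 -> b.[0] != 0 -> same_modulus a b ->
  forall ra rb : seq C, zeros_of a ra -> zeros_of b rb ->
       let Rab := mint ra rb in
       let bRa := msub ra Rab in
       let bRb := msub rb Rab in
       [/\ perm_eq (ra ++ map (@invc C) ra) (rb ++ map (@invc C) rb),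
           (forall y : C, `|y| = 1 ->
              count_mem y ra = count_mem y rb /\ count_mem y ra = count_mem y Rab)
           /\ (all (fun y => `|y| != 1) bRa /\ all (fun y => `|y| != 1) bRb),
           (forall y : C, y \in bRa ->
              [/\ y \notin bRb, invc y \notin bRa
                & count_mem (invc y) bRb = count_mem y bRa])
           /\ (forall y : C, y \in bRb ->
              [/\ y \notin bRa, invc y \notin bRb
                & count_mem (invc y) bRa = count_mem y bRb]),
           size bRa = size bRb /\
           \prod_(y <- bRa) y = \prod_(y <- bRb) invc y
         & exists lambda : C, `|lambda| = 1 /\
             lead_coef b = lambda * lead_coef a * `|\prod_(y <- bRa) y| ].
Proof.
move=> a0 b0 SM ra rb Za Zb Rab bRa bRb.
have [_ hp KK] := part1 Za Zb a0 b0 SM.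
have hc := sumcount hp.
have [ca0 ra0] := zeros_nz Za a0; have [cb0 rb0] := zeros_nz Zb b0.
have cA x : count_mem x bRa = (count_mem x ra - count_mem x rb)%N.
  rewrite /bRa /Rab /mint !count_msub.
  move: (count_mem x ra) (count_mem x rb) => u v; clear; lia.
have cB x : count_mem x bRb = (count_mem x rb - count_mem x ra)%N.
  rewrite /bRb /Rab /mint !count_msub.
  move: (count_mem x ra) (count_mem x rb) => u v; clear; lia.
have cR x : count_mem x Rab = minn (count_mem x ra) (count_mem x rb).
  by rewrite /Rab count_mint.
have pbb : perm_eq bRb (map (@invc C) bRa).
  apply/allP => x _ /=; apply/eqP; rewrite count_invc.
  rewrite cA cB.
  have := hc x; move: (count_mem x ra) (count_mem x rb) (count_mem (invc x) ra)
    (count_mem (invc x) rb) => u v u2 v2; clear; lia.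
split => //.
- split.
    move=> y /unit_invc u; have := hc y; rewrite u cR.
    move: (count_mem y ra) (count_mem y rb) => p q; clear; split; lia.
  split; apply/allP => y; rewrite memE; have := hc y; rewrite ?cA ?cB;
    move=> h1 h2; apply/negP => /eqP /unit_invc u; move: h1 h2; rewrite u;
    move: (count_mem y ra) (count_mem y rb) => p q; clear; lia.
- split => y; rewrite !memE; have := hc y; rewrite !cA !cB ?invcK;
    move: (count_mem y ra) (count_mem y rb) (count_mem (invc y) ra)
      (count_mem (invc y) rb) => u v u2 v2; clear => h1 h2;
    rewrite -!leqNgt; split; lia.
- split; first by rewrite (perm_size pbb) size_map.
  by rewrite (perm_big _ pbb) big_map; apply: eq_bigr => y _; rewrite invcK.
- have bRa0 : all (fun x => x != 0) bRa by apply: msub_nz.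
  set P := \prod_(y <- bRa) y.
  have P0 : P != 0 by rewrite prodf_seq_neq0; apply: sub_all bRa0 => x.
  have Pb0 : \prod_(x <- rb) (- x^*) != 0.
    by rewrite prodf_seq_neq0; apply/allP => x /(allP rb0) /=; rewrite oppr_eq0 conjC_eq0.
  have kp := key_prod ra0 hp.
  move: KK; rewrite /Kof -kp -/Rab -/bRa -/P.
  set Pb := \prod_(x <- rb) (- x^*) in Pb0 * => KK.
  have E : lead_coef b * (lead_coef b)^* = lead_coef a * (lead_coef a)^* * (P * P^*).
    by apply: (mulIf Pb0); rewrite -KK; ring.
  have N : `|lead_coef b| = `|lead_coef a| * `|P|.
    apply: (@pexpIrn _ 2) => //; rewrite ?qualifE /= ?mulr_ge0 ?normr_ge0 //.
    by rewrite exprMn !normCK E.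
  have cP : `|lead_coef a| * `|P| != 0 by rewrite mulf_neq0 ?normr_eq0.
  exists (lead_coef b / (lead_coef a * `|P|)); split.
    by rewrite normrM normfV normrM normr_id N divff.
  field; apply/andP; split => //; by rewrite normr_eq0.
Qed.

End S5.

Section S6.
Variable C : numClosedFieldType.
Implicit Types (x y z c : C) (r s R : seq C).

Definition adm R r := forall x, (count_mem x r + count_mem (invc x) r = count_mem x R)%N.

Definition PL R (L : seq (seq C)) :=
  [/\ uniq L, (forall r, r \in L -> adm R r),
      (forall r, adm R r -> exists2 r', r' \in L & perm_eq r r')
    & (forall r1 r2, r1 \in L -> r2 \in L -> perm_eq r1 r2 -> r1 = r2)].

Lemma eqvE x y : eqv x y = (x == y) || (x == invc y).
Proof. by []. Qed.

Lemma invc_eq x y : (invc x == y) = (x == invc y).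
Proof. by apply/eqP/eqP => h; [rewrite -h invcK | rewrite h invcK]. Qed.

Lemma eqv_invc x y : eqv (invc x) y = eqv x y.
Proof. by rewrite !eqvE invc_eq (inj_eq (can_inj (@invcK C))) orbC. Qed.

Lemma eqv_refl x : eqv x x.
Proof. by rewrite eqvE eqxx. Qed.

Lemma eqv_sym x y : eqv x y = eqv y x.
Proof.
by rewrite !eqvE [x == y]eq_sym [x == invc y]eq_sym invc_eq.
Qed.

Lemma eqv_trans x y z : eqv x y -> eqv y z -> eqv x z.
Proof.
rewrite !eqvE => /orP[/eqP->|/eqP->] /orP[/eqP->|/eqP->]; by rewrite ?invcK ?eqxx ?orbT.
Qed.

Lemma count_filt y s x :
  count_mem x (filter (fun z => ~~ eqv z y) s) = if eqv x y then 0%N else count_mem x s.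
Proof.
rewrite count_filter; case: ifP => h.
  rewrite (eq_count (a2 := pred0)) ?count_pred0 // => z /=.
  by apply/andP => -[/eqP -> ]; rewrite h.
by apply: eq_count => z /=; case: (eqVneq z x) => [->|]; rewrite ?h.
Qed.

Lemma adm_nil r : adm [::] r -> r = [::].
Proof.
case: r => // x r /(_ x) /=; rewrite eqxx; lia.
Qed.

Lemma cat_cancel (o r1 r2 : seq C) : o ++ r1 = o ++ r2 -> r1 = r2.
Proof. by elim: o => //= a o IH [] /IH. Qed.

Lemma adm_filt R y r : adm R r ->
  adm (filter (fun z => ~~ eqv z y) R) (filter (fun z => ~~ eqv z y) r).
Proof.
move=> h x; rewrite !count_filt eqv_invc; case: ifP => //.
Qed.

Lemma adm_zero R y r : adm (filter (fun z => ~~ eqv z y) R) r -> forall x, eqv x y ->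
  count_mem x r = 0%N.
Proof.
move=> h x e; have := h x; rewrite count_filt e; lia.
Qed.

Lemma step R y (opts : seq (seq C)) L' :
  (forall o, o \in opts -> forall x,
     (count_mem x o + count_mem (invc x) o = if eqv x y then count_mem x R else 0)%N) ->
  (forall o1 o2, o1 \in opts -> o2 \in opts -> count_mem y o1 = count_mem y o2 -> o1 = o2) ->
  uniq opts ->
  (forall r, adm R r -> exists2 o, o \in opts & forall x, eqv x y -> count_mem x o = count_mem x r) ->
  PL (filter (fun z => ~~ eqv z y) R) L' ->
  PL R [seq o ++ r | o <- opts, r <- L'].
Proof.
move=> O1 O2 O3 O4 [U1 A1 C1 R1].
set p := fun z => ~~ eqv z y.
have O0 o x : o \in opts -> ~~ eqv x y -> count_mem x o = 0%N.
  by move=> oin e; have := O1 o oin x; rewrite (negbTE e); lia.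
have yy : eqv y y := eqv_refl y.
split.
- apply: allpairs_uniq => // -[o1 r1] [o2 r2] /allpairsP[[o1' r1'] [/= i1 j1 [-> ->]]]
    /allpairsP[[o2' r2'] [/= i2 j2 [-> ->]]] /= E.
  have c1 := adm_zero (A1 _ j1) yy; have c2 := adm_zero (A1 _ j2) yy.
  have eo : o1' = o2'.
    apply: O2 => //; have := congr1 (count_mem y) E; rewrite !count_cat c1 c2 !addn0 //.
  by move: E; rewrite eo => /cat_cancel ->.
- move=> r /allpairsP[[o r'] [/= oin r'in ->]] x.
  rewrite !count_cat addnACA O1 // (A1 _ r'in) count_filt.
  by case: ifP => _; rewrite ?addn0.
- move=> r ar; have [o oin Eo] := O4 r ar.
  have [r' r'in pr'] := C1 _ (adm_filt y ar).
  exists (o ++ r'); first exact: allpairs_f.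
  apply: (@perm_trans _ (o ++ filter p r)); last by rewrite perm_cat2l.
  apply/allP => x _ /=; apply/eqP; rewrite count_cat count_filt.
  case: ifP => e; first by rewrite Eo // addn0.
  by rewrite (O0 _ _ oin) ?e.
- move=> r1 r2 /allpairsP[[o1 r1'] [/= i1 j1 ->]] /allpairsP[[o2 r2'] [/= i2 j2 ->]] P.
  have c1 := adm_zero (A1 _ j1) yy; have c2 := adm_zero (A1 _ j2) yy.
  have eo : o1 = o2.
    apply: O2 => //; have := permP P (pred1 y); rewrite !count_cat c1 c2 !addn0 //.
  by move: P; rewrite eo perm_cat2l => /(R1 _ _ j1 j2) ->.
Qed.

End S6.

Section S7.
Variable C : numClosedFieldType.
Implicit Types (x y z c : C) (r s R : seq C).

Lemma eclass_eq R y z : eqv y z -> eclass R y = eclass R z.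
Proof.
move=> e; apply: eq_filter => x; apply/idP/idP => h.
  exact: eqv_trans h e.
by apply: eqv_trans h _; rewrite eqv_sym.
Qed.

Lemma eclasses_cons R y : y \in R ->
  perm_eq (eclasses R) (eclass R y :: eclasses (filter (fun x => ~~ eqv x y) R)).
Proof.
move=> yR; set R' := filter _ R.
have sub z : ~~ eqv z y -> eclass R' z = eclass R z.
  move=> nz; rewrite /eclass /R' -filter_predI; apply: eq_filter => x /=.
  case: (boolP (eqv x z)) => /= e; rewrite ?andbF ?andbT //; apply/negP => exy.
  by move/negP: nz; apply; apply: eqv_trans exy; rewrite eqv_sym.
apply: uniq_perm; rewrite ?undup_uniq //=.
  rewrite undup_uniq andbT mem_undup; apply/negP => /mapP[z zR' E].
  have : y \in eclass R y by rewrite mem_filter eqv_refl.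
  rewrite E mem_filter => /andP[_]; rewrite mem_filter eqv_refl //.
move=> d; rewrite inE !mem_undup; apply/mapP/idP.
  case=> z zR ->; case: (boolP (eqv z y)) => e.
    by rewrite (eclass_eq R e) eqxx.
  apply/orP; right; apply/mapP; exists z; last by rewrite sub.
  by rewrite mem_filter e.
case/orP => [/eqP ->|/mapP[z zR' ->]]; first by exists y.
move: zR'; rewrite mem_filter => /andP[nz zR]; exists z => //; exact: sub.
Qed.

Lemma Ncount_cons R y : y \in R ->
  Ncount R = (sharp (eclass R y) * Ncount (filter (fun x => ~~ eqv x y) R))%N.
Proof. by move=> yR; rewrite /Ncount (perm_big _ (eclasses_cons yR)) big_cons. Qed.

Definition closedR R := [/\ (forall x, count_mem (invc x) R = count_mem x R),
  (forall x, invc x = x -> ~~ odd (count_mem x R)) & 0 \notin R].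

Lemma closed_filt R y : closedR R -> closedR (filter (fun x => ~~ eqv x y) R).
Proof.
case=> h1 h2 h3; split.
- by move=> x; rewrite !count_filt eqv_invc h1.
- by move=> x e; rewrite count_filt; case: ifP => _; rewrite ?h2.
- by rewrite mem_filter negb_and h3 orbT.
Qed.

Lemma count_nseq1 x n y : count_mem x (nseq n y) = ((y == x) * n)%N.
Proof. by rewrite count_nseq. Qed.

End S7.

Section S8.
Variable C : numClosedFieldType.
Implicit Types (x y z c : C) (r s R : seq C).

Lemma enum_adm R : closedR R -> exists L, PL R L /\ size L = Ncount R.
Proof.
move: {2}(size R) (leqnn (size R)) => n; elim: n R => [|n IH] R.
  rewrite leqn0 => /nilP -> _; exists [:: [::]]; split; last by rewrite /Ncount /eclasses /= big_nil.
  split => //.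
  - by move=> r; rewrite inE => /eqP -> x.
  - by move=> r /adm_nil ->; exists [::]; rewrite ?inE.
  - by move=> r1 r2; rewrite !inE => /eqP -> /eqP ->.
case: R => [|y R0] hs hR.
  exists [:: [::]]; split; last by rewrite /Ncount /eclasses /= big_nil.
  split => //.
  - by move=> r; rewrite inE => /eqP -> x.
  - by move=> r /adm_nil ->; exists [::]; rewrite ?inE.
  - by move=> r1 r2; rewrite !inE => /eqP -> /eqP ->.
set R := y :: R0 in hR *.
have yR : y \in R by rewrite inE eqxx.
set p := fun x => ~~ eqv x y.
set R' := filter p R.
have hR' : closedR R' := closed_filt y hR.
have sR' : (size R' <= n)%N.
  rewrite /R' /= /p eqv_refl /= size_filter; have := count_size (fun x => ~~ eqv x y) R0; move: hs => /=; lia.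
have [L' [PL' sL']] := IH R' sR' hR'.
case: hR => h1 h2 h3.
have y0 : y != 0 by apply: contraNneq h3 => <-.
set k := count_mem y R.
have kk : count_mem (invc y) R = k by rewrite h1.
case: (eqVneq (invc y) y) => yy.
-
  have ek : ~~ odd k by apply: h2.
  have ky : (k./2 + k./2 = k)%N by rewrite addnn halfK (negbTE ek) subn0.
  have eqy x : eqv x y = (x == y) by rewrite eqvE yy orbb.
  exists [seq o ++ r | o <- [:: nseq k./2 y], r <- L']; split.
    apply: (@step C R y) => //.
    + move=> o; rewrite inE => /eqP -> x; rewrite !count_nseq1 eqy.
      case: (eqVneq x y) => [->|xy]; first by rewrite yy eqxx /= !mul1n.
      case: (eqVneq y (invc x)) => [e|]; last by rewrite mul0n.
      by move: xy; rewrite -[x]invcK -e yy eqxx.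
    + by move=> o1 o2; rewrite !inE => /eqP -> /eqP ->.
    + move=> r ar; exists (nseq k./2 y); rewrite ?inE // => x; rewrite eqy => /eqP ->.
      rewrite count_nseq1 eqxx mul1n; have := ar y; rewrite yy -/k => <-.
      rewrite addnn; by rewrite doubleK.
  rewrite size_allpairs /= sL' (Ncount_cons yR) -/p -/R'; congr (_ * _)%N.
  rewrite /sharp; suff -> : has (fun x => `|x| == 1) (eclass R y) by [].
  apply/hasP; exists y; first by rewrite mem_filter eqv_refl yR.
  by rewrite -invc_fix // yy.
-
  pose o j := nseq j y ++ nseq (k - j) (invc y).
  have cy j : count_mem y (o j) = j.
    by rewrite /o count_cat !count_nseq1 eqxx mul1n (negbTE yy) mul0n addn0.
  have cy' j : count_mem (invc y) (o j) = (k - j)%N.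
    by rewrite /o count_cat !count_nseq1 eqxx mul1n [y == _]eq_sym (negbTE yy) mul0n add0n.
  have cx j x : ~~ eqv x y -> count_mem x (o j) = 0%N.
    rewrite eqvE negb_or => /andP[a b].
    by rewrite /o count_cat !count_nseq1 eq_sym (negbTE a) eq_sym (negbTE b).
  exists [seq o' ++ r | o' <- [seq o j | j <- iota 0 k.+1], r <- L']; split.
    apply: (@step C R y) => //.
    + move=> o' /mapP[j]; rewrite mem_iota add0n ltnS => jk -> x.
      case: (boolP (eqv x y)) => e; last by rewrite !cx // eqv_invc.
      move: e; rewrite eqvE => /orP[/eqP->|/eqP->].
        by rewrite cy cy' -/k; lia.
      by rewrite invcK cy cy' kk; lia.
    + by move=> o1 o2 /mapP[j1 _ ->] /mapP[j2 _ ->]; rewrite !cy => ->.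
    + rewrite map_inj_uniq ?iota_uniq // => j1 j2 /(congr1 (count_mem y)).
      by rewrite !cy.
    + move=> r ar; have := ar y; rewrite -/k => ak.
      exists (o (count_mem y r)).
        by apply/mapP; exists (count_mem y r) => //; rewrite mem_iota add0n ltnS -ak leq_addr.
      move=> x; rewrite eqvE => /orP[/eqP->|/eqP->]; first by rewrite cy.
      by rewrite cy' -ak addKn.
  rewrite size_allpairs size_map size_iota sL' (Ncount_cons yR) -/p -/R'; congr (_ * _)%N.
  have nu x : eqv x y -> `|x| != 1.
    rewrite eqvE => /orP[/eqP->|/eqP->].
      by rewrite -invc_fix.
    rewrite -invc_fix ?invc_eq0 // invcK; by rewrite eq_sym.
  rewrite /sharp; have -> : has (fun x => `|x| == 1) (eclass R y) = false.
    apply/hasP => -[x]; rewrite mem_filter => /andP[e _]; by rewrite (negbTE (nu x e)).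
  rewrite size_filter.
  have -> : count (fun x => eqv x y) R = (k + k)%N.
    rewrite -{2}kk /k -count_predUI.
    rewrite (@eq_count _ (predI (pred1 y) (pred1 (invc y))) pred0); last first.
      move=> x /=; apply/negP => /andP[/eqP -> /eqP e]; by move: yy; rewrite -e eqxx.
    by rewrite count_pred0 addn0; apply: eq_count => x /=; rewrite eqvE.
  by rewrite addnn divn2 doubleK add1n.
Qed.

End S8.

Section S9.
Variable C : numClosedFieldType.
Implicit Types (x y z c : C) (r s : seq C) (b : {poly C}).
Variable a : {poly C}.
Hypothesis ha0 : a.[0] != 0.
Variable ra : seq C.
Hypothesis Za : zeros_of a ra.

Let R := ra ++ map (@invc C) ra.
Let ca := lead_coef a.

Lemma ca0 : ca != 0. Proof. by have [] := zeros_nz Za ha0. Qed.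
Lemma ra0 : all (fun x => x != 0) ra. Proof. by have [] := zeros_nz Za ha0. Qed.

Lemma closed_R : closedR R.
Proof.
split.
- by move=> x; rewrite /R !count_cat !count_invc invcK addnC.
- move=> x e; rewrite /R count_cat count_invc e addnn odd_double //.
- rewrite mem_cat negb_or; apply/andP; split; apply/negP.
    by move/(allP ra0); rewrite eqxx.
  by case/mapP => y /(allP ra0) y0 /esym/eqP; rewrite invc_eq0 (negbTE y0).
Qed.

Lemma admE r : adm R r -> perm_eq (r ++ map (@invc C) r) R.
Proof. by move=> h; apply/allP => x _ /=; apply/eqP; rewrite count_cat count_invc h. Qed.

Lemma admI r : perm_eq (r ++ map (@invc C) r) R -> adm R r.
Proof. by move=> /permP h x; have := h (pred1 x); rewrite count_cat count_invc. Qed.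

Lemma adm_nz r : adm R r -> all (fun x => x != 0) r.
Proof.
move=> h; apply/allP => x xr; apply/negP => /eqP x0; subst x.
have := h 0; have : 0 \notin R by case: closed_R.
rewrite memE; move: xr; rewrite memE; lia.
Qed.

Definition Pof r := \prod_(y <- msub ra (mint ra r)) y.
Definition q0 r := \prod_(x <- r) (- x).
Definition tof r := `|ca| * `|Pof r|.
Definition cof r := tof r * `|q0 r| / q0 r.
Definition mkb r := polyof (cof r) r.

Lemma Pof_nz r : Pof r != 0.
Proof.
rewrite /Pof prodf_seq_neq0; apply: sub_all (msub_nz _ ra0) => x //.
Qed.

Lemma q0_nz r : all (fun x => x != 0) r -> q0 r != 0.
Proof.
move=> h; rewrite /q0 prodf_seq_neq0; apply/allP => x /(allP h) /=.
by rewrite oppr_eq0.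
Qed.

Lemma tof_gt0 r : 0 < tof r.
Proof. by rewrite /tof mulr_gt0 // normr_gt0 ?ca0 ?Pof_nz. Qed.

Lemma norm_cof r : all (fun x => x != 0) r -> `|cof r| = tof r.
Proof.
move=> h; rewrite /cof normrM normfV normrM (gtr0_norm (tof_gt0 r)).
by rewrite ?normr_id mulfK // normr_eq0 q0_nz.
Qed.

Lemma mkb0 r : all (fun x => x != 0) r -> (mkb r).[0] = tof r * `|q0 r|.
Proof. by move=> h; rewrite /mkb polyof0 -/(q0 r) /cof mulfVK ?q0_nz. Qed.

Lemma cof_nz r : all (fun x => x != 0) r -> cof r != 0.
Proof. by move=> h; rewrite -normr_eq0 norm_cof // gt_eqF ?tof_gt0. Qed.

Lemma good r : adm R r ->
  [/\ (mkb r).[0] != 0, same_modulus a (mkb r) & 0 < (mkb r).[0]].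
Proof.
move=> ar; have r0 := adm_nz ar; have pr := admE ar.
have pos : 0 < (mkb r).[0].
  by rewrite mkb0 // mulr_gt0 ?tof_gt0 // normr_gt0 q0_nz.
split => //; first by rewrite gt_eqF.
have sz : size r = size ra.
  have := perm_size pr; rewrite /R !size_cat !size_map; by move/(congr1 half); rewrite !addnn !doubleK.
have eQ : Q2 r = Q2 ra by rewrite /Q2 (perm_big _ pr).
have eK : Kof (cof r) r = Kof ca ra.
  have pr2 : perm_eq R (r ++ map (@invc C) r) by rewrite perm_sym.
  have kp := key_prod ra0 pr2.
  rewrite /Kof -kp -/(Pof r) -normCK norm_cof // /tof exprMn !normCK.
  ring.
move=> s; have [z [zs z0]] := exists_avoid s; exists z; split => //; split => //.
rewrite (zeros_ofE Za) -/ca /mkb !eval_mod // ?ra0 //.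
by rewrite eQ eK sz.
Qed.

Lemma uniq_b b r : adm R r -> b.[0] != 0 -> same_modulus a b -> 0 < b.[0] ->
  zeros_of b r -> b = mkb r.
Proof.
move=> ar b0 SM bpos Zb; have r0 := adm_nz ar.
have [_ _ _ _ [l [nl el]]] := partAE ha0 b0 SM Za Zb.
have nb : `|lead_coef b| = tof r.
  by rewrite el !normrM nl mul1r normr_id.
have E : lead_coef b = cof r.
  apply: (mulIf (q0_nz r0)).
  have -> : lead_coef b * q0 r = b.[0] by rewrite {2}(zeros_ofE Zb) polyof0.
  have -> : cof r * q0 r = (mkb r).[0] by rewrite /mkb polyof0.
  have [_ _ gpos] := good ar.
  rewrite -(gtr0_norm bpos) -(gtr0_norm gpos).
  rewrite {1}(zeros_ofE Zb) /mkb !polyof0 -!/(q0 r) normrM nb (normrM (cof r)) norm_cof //.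
by rewrite (zeros_ofE Zb) E.
Qed.

Lemma mkb_inj r1 r2 : adm R r1 -> adm R r2 -> mkb r1 = mkb r2 -> perm_eq r1 r2.
Proof.
move=> a1 a2 E.
have l1 : lead_coef (mkb r1) = cof r1.
  by rewrite /mkb /polyof lead_coefZ (monicP (monic_prod_XsubC _ _ _)) mulr1.
have l2 : lead_coef (mkb r2) = cof r2.
  by rewrite /mkb /polyof lead_coefZ (monicP (monic_prod_XsubC _ _ _)) mulr1.
have ec : cof r1 = cof r2 by rewrite -l1 -l2 E.
move: E; rewrite /mkb /polyof ec => /(scalerI (cof_nz (adm_nz a2))).
exact: prod_XsubC_eq.
Qed.

End S9.

Lemma modulusN (C : numClosedFieldType) (b : {poly C}) z :
  (- b).[z] * pstar (- b) z = b.[z] * pstar b z.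
Proof. by rewrite /pstar !hornerN rmorphN /= mulrNN. Qed.

Lemma same_modulusN (C : numClosedFieldType) (a b : {poly C}) :
  same_modulus a (- b) <-> same_modulus a b.
Proof.
split => h s; have [z [zs [z0 E]]] := h s; exists z; split => //; split => //;
  by rewrite E ?modulusN.
Qed.

Lemma size_polyof (C : numClosedFieldType) (c : C) r : c != 0 -> size (polyof c r) = (size r).+1.
Proof. by move=> c0; rewrite /polyof size_scale // size_prod_XsubC. Qed.

Lemma partF (C : numClosedFieldType) (a : {poly C}) (ha0 : a.[0] != 0) (ra : seq C)
  (Za : zeros_of a ra) :
  let R := ra ++ map (@invc C) ra in
     (exists s : seq {poly C}, [/\ uniq s,
        (forall b, b \in s <-> [/\ b.[0] != 0, same_modulus a b & 0 < b.[0]])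
        & size s = Ncount R]) /\
     (exists s : seq {poly C}, [/\ uniq s,
        (forall b, b \in s <-> [/\ b.[0] != 0, same_modulus a b & b.[0] < 0])
        & size s = Ncount R]).
Proof.
move=> R.
have [L [[U1 A1 C1 R1] sL]] := enum_adm (closed_R ha0 Za).
have Hs : exists s : seq {poly C}, [/\ uniq s,
        (forall b, b \in s <-> [/\ b.[0] != 0, same_modulus a b & 0 < b.[0]])
        & size s = Ncount R].
  exists (map (mkb a ra) L); split.
  - rewrite map_inj_in_uniq // => r1 r2 i1 i2 E.
    by apply: R1 => //; apply: (mkb_inj ha0 Za (A1 _ i1) (A1 _ i2) E).
  - move=> b; split.
      by case/mapP => r ri ->; apply: (good ha0 Za (A1 _ ri)).
    case=> b0 SM bpos.
    have [rb Zb] := closed_field_poly_normal b.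
    have [_ hp _] := part1 Za Zb ha0 b0 SM.
    have arb : adm R rb by apply: admI; rewrite perm_sym.
    have [r' r'i pr'] := C1 _ arb.
    have Zb' : zeros_of b r' by rewrite /zeros_of -(perm_big _ pr').
    apply/mapP; exists r' => //; exact: (uniq_b ha0 Za (A1 _ r'i) b0 SM bpos Zb').
  - by rewrite size_map.
split => //.
have [s [us ms ss]] := Hs.
exists (map (fun p => - p) s); split.
- by rewrite map_inj_uniq // => p q; apply: oppr_inj.
- move=> b; rewrite -{1}[b]opprK (mem_map oppr_inj) ms hornerN oppr_eq0 oppr_gt0.
  split; case=> h1 h2 h3; split => //.
    by move/same_modulusN: h2.
  by apply/same_modulusN.
- by rewrite size_map.
Qed.

Unset Implicit Arguments.
Set Strict Implicit.

Theorem lemmaA1 (C : numClosedFieldType) (a : {poly C}) (ha0 : a.[0] != 0) :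
  (forall b : {poly C}, b.[0] != 0 -> same_modulus a b ->
     size a = size b /\
     forall ra rb : seq C, zeros_of a ra -> zeros_of b rb ->
       let Rab := mint ra rb in
       let bRa := msub ra Rab in
       let bRb := msub rb Rab in
       [/\ (* (a) *)
           perm_eq (ra ++ map (@invc C) ra) (rb ++ map (@invc C) rb),
           (* (b) *)
           (forall y : C, `|y| = 1 ->
              count_mem y ra = count_mem y rb /\ count_mem y ra = count_mem y Rab)
           /\ (all (fun y => `|y| != 1) bRa /\ all (fun y => `|y| != 1) bRb),
           (* (c) *)
           (forall y : C, y \in bRa ->
              [/\ y \notin bRb, invc y \notin bRa
                & count_mem (invc y) bRb = count_mem y bRa])
           /\ (forall y : C, y \in bRb ->
              [/\ y \notin bRa, invc y \notin bRb
                & count_mem (invc y) bRa = count_mem y bRb]),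
           (* (d) *)
           size bRa = size bRb /\
           \prod_(y <- bRa) y = \prod_(y <- bRb) invc y
         & (* (e) *)
           exists lambda : C, `|lambda| = 1 /\
             lead_coef b = lambda * lead_coef a * `|\prod_(y <- bRa) y| ]) /\
  (* (f) *)
  (forall ra : seq C, zeros_of a ra ->
     let R := ra ++ map (@invc C) ra in
     (exists s : seq {poly C}, [/\ uniq s,
        (forall b, b \in s <-> [/\ b.[0] != 0, same_modulus a b & 0 < b.[0]])
        & size s = Ncount R]) /\
     (exists s : seq {poly C}, [/\ uniq s,
        (forall b, b \in s <-> [/\ b.[0] != 0, same_modulus a b & b.[0] < 0])
        & size s = Ncount R])).
Proof.
split; last by move=> ra Za; exact: partF.
move=> b b0 SM; split; last exact: partAE.
have [ra Za] := closed_field_poly_normal a.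
have [rb Zb] := closed_field_poly_normal b.
have [sz _ _] := part1 Za Zb ha0 b0 SM.
have [ca0 _] := zeros_nz Za ha0; have [cb0 _] := zeros_nz Zb b0.
by rewrite (zeros_ofE Za) (zeros_ofE Zb) !size_polyof // sz.
Qed.
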